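(* Let $n$ and $m$ be integers with $n\geq 2$ and $1\leq m\leq\binom{n}{2}$, and let $n'=\min\{\lfloor\frac{m+3}{2}\rfloor,n\}$. A two-terminal graph $G\in T_{n,m}$ is a $2$-uniformly most reliable two-terminal graph ($2$-UMRTTG) if and only if $G$ contains $A_{n',0}$ as a subgraph (as a two-terminal graph, i.e. with terminals corresponding to terminals).
   Context: All graphs are finite, simple and undirected. A two-terminal graph is a graph $G$ together with two distinguished vertices $s,t$ (the terminals). Two two-terminal graphs are isomorphic if there is a graph isomorphism between them mapping the set of terminals onto the set of terminals. $T_{n,m}$ denotes the set of all pairwise nonisomorphic two-terminal graphs with $n$ vertices and $m$ edges. For a positive integer $d$, a $d$-pathset of a two-terminal graph $G$ is a spanning subgraph of $G$ containing a path of length (number of edges) at most $d$ joining $s$ and $t$. For $\rho\in[0,1]$, $R_G^d(\rho)$ is the probability that the random spanning subgraph obtained from $G$ by deleting each edge independently with probability $\rho$ is a $d$-pathset. A graph $G\in T_{n,m}$ is a $d$-UMRTTG if $R_G^d(\rho)\geq R_H^d(\rho)$ for every $H\in T_{n,m}$ and every $\rho\in[0,1]$. For an integer $k\geq 2$, $A_{k,0}$ is the two-terminal graph with vertex set $\{s,t,v_3,\ldots,v_k\}$, terminals $s,t$, and edge set $\{st\}\cup\{sv_i,v_it:3\leq i\leq k\}$ (so $A_{2,0}$ is the single edge $st$). *)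

(* Defs.v *)
From HB Require Import structures.
From mathcomp Require Import all_boot all_order all_algebra.
From mathcomp Require Import reals.
Set Implicit Arguments. Unset Strict Implicit. Unset Printing Implicit Defensive.
Import Order.TTheory GRing.Theory Num.Theory.

Definition ttg (n : nat) (E : {set {set 'I_n}}) (s t : 'I_n) : Prop :=
  (forall e, e \in E -> #|e| = 2) /\ s != t.

(* F (a spanning subgraph, given by its edge set) contains a path of length
   (number of edges) at most d from s to t: a sequence of pairwise distinct
   vertices s = v_0, v_1, ..., v_k = t with k <= d and each {v_i, v_(i+1)} in F.
   The path v_1..v_k is encoded as a finite function 'I_k -> 'I_n. *)
Definition has_short_path (n : nat) (d : nat) (F : {set {set 'I_n}}) (s t : 'I_n) : bool :=
  [exists k : 'I_d.+1, [exists p : {ffun 'I_k -> 'I_n},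
     let q := [seq p i | i <- enum 'I_k] in
     [&& path (fun x y => [set x; y] \in F) s q, last s q == t & uniq (s :: q)]]].

Definition pathset (n d : nat) (E F : {set {set 'I_n}}) (s t : 'I_n) : bool :=
  (F \subset E) && has_short_path d F s t.

(* R_G^d(rho): probability that the random spanning subgraph obtained by
   deleting each edge independently with probability rho is a d-pathset. *)
Definition reliability (R : realType) (n d : nat) (E : {set {set 'I_n}}) (s t : 'I_n)
  (rho : R) : R :=
  \sum_(F : {set {set 'I_n}} | pathset d E F s t)
     (rho ^+ #|E :\: F| * (1 - rho) ^+ #|F|)%R.

Definition UMRTTG (R : realType) (n d : nat) (E : {set {set 'I_n}}) (s t : 'I_n) : Prop :=
  forall (E' : {set {set 'I_n}}) (s' t' : 'I_n),
    ttg E' s' t' -> #|E'| = #|E| ->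
    forall rho : R, (0 <= rho)%R -> (rho <= 1)%R ->
      (reliability d E' s' t' rho <= reliability d E s t rho)%R.

(* The two-terminal graph A_{k+2,0} on vertex set 'I_(k+2): terminals 0 and 1,
   edge {0,1}, and edges {0,i}, {i,1} for 2 <= i < k+2.  Its edges are exactly
   the pairs {x,y}, x != y, with x <= 1. *)
Definition A_edges (k : nat) : {set {set 'I_k.+2}} :=
  [set [set x; y] | x in 'I_k.+2, y in 'I_k.+2 & (x != y) && (x <= 1)%N].
Definition A_s (k : nat) : 'I_k.+2 := inord 0.
Definition A_t (k : nat) : 'I_k.+2 := inord 1.

Definition tt_subgraph (n k : nat) (E : {set {set 'I_n}}) (s t : 'I_n)
  (E' : {set {set 'I_k}}) (s' t' : 'I_k) : Prop :=
  exists f : 'I_k -> 'I_n,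
    [/\ injective f, [set f s'; f t'] = [set s; t] &
        forall e, e \in E' -> f @: e \in E].

(* Main.v *)
Require Import Defs.
From HB Require Import structures.
From mathcomp Require Import all_boot all_order all_algebra.
From mathcomp Require Import reals.
From mathcomp Require Import ring lra zify.
Import Order.TTheory GRing.Theory Num.Theory.

Module PG.
Set Implicit Arguments. Unset Strict Implicit. Unset Printing Implicit Defensive.
Local Open Scope ring_scope.

Section Mu.
Variables (R : comPzRingType) (T : finType) (r : R).
Definition w (E F : {set T}) : R := r ^+ #|E :\: F| * (1 - r) ^+ #|F|.
Definition mu (E : {set T}) (P : pred {set T}) : R :=
  \sum_(F : {set T} | F \subset E) w E F * (P F)%:R.

Lemma mu_ext (E : {set T}) (P Q : pred {set T}) : (forall F : {set T}, F \subset E -> P F = Q F) -> mu E P = mu E Q.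
Proof. by move=> h; apply: eq_bigr => F /h ->. Qed.

Lemma mu0 (P : pred {set T}) : mu set0 P = (P set0)%:R.
Proof.
rewrite /mu (big_pred1 set0) => [|F]; last by rewrite subset0.
by rewrite /w set0D !cards0 !expr0 !mul1r.
Qed.

Lemma mu_split (e : T) (E : {set T}) (P : pred {set T}) : e \notin E ->
  mu (e |: E) P = r * mu E P + (1 - r) * mu E (fun F => P (e |: F)).
Proof.
move=> eE; rewrite /mu (bigID (fun F : {set T} => e \in F)) /= addrC; congr (_ + _).
  rewrite big_distrr /=.
  have hl : forall F : {set T}, (F \subset e |: E) && (e \notin F) = (F \subset E).
    move=> F; apply/andP/idP.
      case=> sF nF; apply/subsetP=> x xF; move/subsetP: sF => /(_ x xF).
      rewrite in_setU1 => /orP[/eqP ex|//]; by rewrite -ex xF in nF.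
    move=> sF; split; first by apply: subset_trans sF (subsetU1 _ _).
    by apply/negP=> eF; move/subsetP: sF => /(_ e eF); rewrite (negbTE eE).
  rewrite (eq_bigl _ _ hl); apply: eq_bigr => F sF.
  have nF : e \notin F by apply/negP=> eF; move/subsetP: sF => /(_ e eF); rewrite (negbTE eE).
  rewrite /w setDUl.
  have -> : [set e] :\: F = [set e].
    by apply/setP=> x; rewrite !inE andbC; case: (x =P e) => [->|]; rewrite ?nF.
  rewrite cardsU1 in_setD (negbTE eE) andbF /= add1n exprS; ring.
rewrite big_distrr /=.
rewrite (reindex_onto (fun F : {set T} => e |: F) (fun F : {set T} => F :\ e)) /=; last first.
  by move=> F /andP[_ eF]; rewrite setD1K.
have hl : forall F : {set T}, (e |: F \subset e |: E) && (e \in e |: F) && ((e |: F) :\ e == F)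
   = (F \subset E).
  move=> F; rewrite setU11 andbT; apply/andP/idP.
    case=> sF /eqP hF; apply/subsetP=> x xF.
    have : x \in (e |: F) :\ e by rewrite hF.
    rewrite !inE => /andP[xe _]; move/subsetP: sF => /(_ x); rewrite !inE xF orbT.
    by move=> /(_ isT) /orP[/eqP xe'|//]; rewrite xe' eqxx in xe.
  move=> sF; split; first by apply: setUS.
  apply/eqP/setP=> x; rewrite !inE; case: eqP => // ->; rewrite /=.
  by apply/esym/negP=> eF; move/subsetP: sF => /(_ e eF); rewrite (negbTE eE).
rewrite (eq_bigl _ _ hl); apply: eq_bigr => F sF.
have nF : e \notin F by apply/negP=> eF; move/subsetP: sF => /(_ e eF); rewrite (negbTE eE).
rewrite /w.
have -> : (e |: E) :\: (e |: F) = E :\: F.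
  apply/setP=> x; rewrite !inE; case: eqP => //= ->; rewrite (negbTE eE) nF andbF //.
rewrite cardsU1 nF add1n exprS; ring.
Qed.

Lemma set_induc (Q : {set T} -> Prop) : Q set0 ->
  (forall (e : T) (E : {set T}), e \notin E -> Q E -> Q (e |: E)) -> forall E : {set T}, Q E.
Proof.
move=> h0 hS E; elim: {E}#|E| {-2}E (eqxx #|E|) => [|k IH] E /eqP hE.
  by move/eqP: hE; rewrite cards_eq0 => /eqP ->.
have : (0 < #|E|)%N by rewrite hE.
case/card_gt0P=> e eE.
rewrite -(setD1K eE); apply: hS; first by rewrite !inE eqxx.
by apply: IH; rewrite (cardsD1 e E) eE add1n in hE; case: hE => ->.
Qed.

Lemma mu_true (E : {set T}) : mu E predT = 1.
Proof.
elim/set_induc: E => [|e E eE IH]; first by rewrite mu0.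
by rewrite mu_split // IH; ring.
Qed.

Lemma mu_prod (A B : {set T}) (P Q : pred {set T}) : A :&: B = set0 ->
  mu (A :|: B) (fun F => P (F :&: A) && Q (F :&: B)) = mu A P * mu B Q.
Proof.
elim/set_induc: B Q => [|e B eB IH] Q dAB.
  rewrite setU0 mu0 /mu big_distrl /=; apply: eq_bigr => F sF.
  rewrite setI0 (setIidPl sF); case: (P F); case: (Q set0) => /=; ring.
have eA : e \notin A.
  apply/negP=> eA; have : e \in A :&: (e |: B) by rewrite !inE eA eqxx.
  by rewrite dAB inE.
have dAB' : A :&: B = set0.
  apply/setP=> x; rewrite in_set0; apply/negbTE/negP=> xAB.
  have : x \in A :&: (e |: B) by move: xAB; rewrite !inE => /andP[-> ->]; rewrite orbT.
  by rewrite dAB in_set0.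
have eAB : e \notin A :|: B by rewrite inE negb_or eA eB.
rewrite setUCA mu_split // mu_split //.
rewrite (mu_ext (Q := fun F => P (F :&: A) && Q (F :&: B))); last first.
  move=> F sF; have nF : e \notin F.
    by apply/negP=> eF; move/subsetP: sF => /(_ e eF); rewrite (negbTE eAB).
  congr (_ && Q _); apply/setP=> x; rewrite !inE; case: (x =P e) => // ->.
  by rewrite (negbTE nF).
rewrite (mu_ext (E := A :|: B) (P := fun F => P ((e |: F) :&: A) && Q ((e |: F) :&: (e |: B))) (Q := fun F => P (F :&: A) && (fun G => Q (e |: G)) (F :&: B))); last first.
  move=> F sF /=; congr (P _ && Q _); apply/setP=> x; rewrite !inE.
    by case: (x =P e) => //= ->; rewrite (negbTE eA) ?andbF.
  by case: (x =P e).
rewrite (IH Q) // (IH (fun G => Q (e |: G))) //; ring.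
Qed.

Lemma mu_restr (A E : {set T}) (P : pred {set T}) : A \subset E ->
  mu E (fun F => P (F :&: A)) = mu A P.
Proof.
move=> sAE; have dA : A :&: (E :\: A) = set0.
  by apply/setP=> x; rewrite !inE; case: (x \in A); rewrite ?andbF.
have -> : E = A :|: (E :\: A) by rewrite -{1}(setID E A) (setIidPr sAE).
rewrite -[RHS]mulr1 -(mu_true (E :\: A)) -mu_prod //.
by apply: mu_ext => F _; rewrite andbT.
Qed.

Lemma mu_neg (E : {set T}) (P : pred {set T}) : mu E (fun F => ~~ P F) = 1 - mu E P.
Proof.
rewrite -(mu_true E) /mu -sumrB; apply: eq_bigr => F _; case: (P F) => /=; ring.
Qed.
End Mu.

End PG.
Import PG.

Module PH.
Set Implicit Arguments. Unset Strict Implicit. Unset Printing Implicit Defensive.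

Lemma hsp_char n (F : {set {set 'I_n}}) (s t : 'I_n) : s != t ->
  has_short_path 2 F s t = ([set s; t] \in F) ||
   [exists v, [&& v != s, v != t, [set s; v] \in F & [set v; t] \in F]].
Proof.
move=> hst; apply/idP/idP.
  case/existsP=> -[k hk] /existsP [p] /=.
  move: (size_map p (enum 'I_k)); rewrite size_enum_ord.
  move: [seq p i | i <- enum 'I_k] => q hq /and3P[hp hl hu].
  case: q hq hp hl hu => [|a [|b [|c q]]] //= hq.
  - by move=> _ /eqP ht; rewrite ht eqxx in hst.
  - by rewrite andbT => hp /eqP <-; rewrite hp.
  - rewrite andbT => /andP[h1 h2] /eqP hb; subst b.
    rewrite !inE !negb_or => /andP[/andP[sa _] /andP[ta _]].
    apply/orP; right; apply/existsP; exists a.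
    by rewrite eq_sym sa ta h1 h2.
  - by have := hk; rewrite -hq.
case/orP.
  move=> h; apply/existsP; exists (Ordinal (isT : 1 < 3)); apply/existsP.
  exists [ffun _ => t]; rewrite /= enum_ordSl enum_ord0 /= ffunE h eqxx /=.
  by rewrite !inE andbT.
case/existsP=> v /and4P[vs vt h1 h2].
apply/existsP; exists (Ordinal (isT : 2 < 3)); apply/existsP.
exists [ffun i : 'I_2 => if val i == 0 then v else t].
rewrite /= enum_ordSl enum_ordSl enum_ord0 /= !ffunE /= h1 h2 eqxx /=.
by rewrite !inE !negb_or eq_sym vs hst vt.
Qed.

End PH.
Import PH.

Module PK.
Set Implicit Arguments. Unset Strict Implicit. Unset Printing Implicit Defensive.

Section Graph.
Variables (n : nat) (s t : 'I_n).

Definition Cn (E : {set {set 'I_n}}) : {set 'I_n} :=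
  [set v | [&& v != s, v != t, [set s; v] \in E & [set v; t] \in E]].
Definition Bv (v : 'I_n) : {set {set 'I_n}} := [set [set s; v]; [set v; t]].
Definition BC (X : {set 'I_n}) : {set {set 'I_n}} := \bigcup_(v in X) Bv v.
Definition good (X : {set 'I_n}) := forall v, v \in X -> (v != s) && (v != t).

Lemma in2 (a b c d x : 'I_n) : [set a; b] = [set c; d] -> x \in [set a; b] ->
  (x == c) || (x == d).
Proof. by move=> ->; rewrite !inE. Qed.

Lemma Bv_inj (hst : s != t) v v' e : (v != s) && (v != t) -> (v' != s) && (v' != t) ->
  e \in Bv v -> e \in Bv v' -> v = v'.
Proof.
move=> /andP[vs vt] /andP[vs' vt'].
rewrite !inE => /orP[/eqP-> | /eqP->] /orP[/eqP h | /eqP h].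
- have := in2 h (_ : v \in _); rewrite !inE eqxx orbT => /(_ isT).
  by rewrite (negbTE vs) => /eqP.
- have := in2 h (_ : s \in _); rewrite !inE eqxx => /(_ isT).
  by rewrite eq_sym (negbTE vs') (negbTE hst).
- have := in2 h (_ : t \in _); rewrite !inE eqxx orbT => /(_ isT).
  by rewrite eq_sym (negbTE hst) eq_sym (negbTE vt').
- have := in2 h (_ : v \in _); rewrite !inE eqxx => /(_ isT).
  by rewrite (negbTE vt) orbF => /eqP.
Qed.

Lemma Bv_card (hst : s != t) v : (v != s) && (v != t) -> #|Bv v| = 2.
Proof.
move=> /andP[vs vt]; rewrite cards2; case: eqP => // h.
have := in2 h (_ : s \in _); rewrite !inE eqxx => /(_ isT).
by rewrite eq_sym (negbTE vs) (negbTE hst).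
Qed.

Lemma BC0 : BC set0 = set0.
Proof. by rewrite /BC big_set0. Qed.

Lemma BC_U1 (hst : s != t) (v : 'I_n) (X : {set 'I_n}) : v \notin X -> good (v |: X) ->
  BC (v |: X) = Bv v :|: BC X /\ Bv v :&: BC X = set0.
Proof.
move=> vX gX; split; first by rewrite /BC bigcup_setU big_set1.
apply/setP=> e; rewrite in_set0; apply/negbTE/negP; rewrite inE => /andP[e1].
case/bigcupP=> v' v'X e2.
have gv : (v != s) && (v != t) by apply: gX; rewrite setU11.
have gv' : (v' != s) && (v' != t) by apply: gX; rewrite inE v'X orbT.
by have := Bv_inj hst gv gv' e1 e2 => vv; rewrite vv v'X in vX.
Qed.

Lemma good_U1 (v : 'I_n) (X : {set 'I_n}) : good (v |: X) -> good X.
Proof. by move=> g x xX; apply: g; rewrite inE xX orbT. Qed.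

Lemma BC_card (hst : s != t) (X : {set 'I_n}) : good X -> #|BC X| = (2 * #|X|)%N.
Proof.
elim/set_induc: X => [|v X vX IH] gX; first by rewrite BC0 !cards0.
have [-> d] := BC_U1 hst vX gX.
rewrite cardsU d cards0 subn0 Bv_card //; last by apply: gX; rewrite setU11.
by rewrite IH ?cardsU1 ?vX //; [rewrite mulnDr | apply: good_U1 gX].
Qed.

Local Open Scope ring_scope.

Lemma mu_Bv (R : comPzRingType) (r : R) (hst : s != t) v : (v != s) && (v != t) ->
  mu r (Bv v) (fun G => ~~ (([set s; v] \in G) && ([set v; t] \in G))) = 1 - (1 - r) ^+ 2.
Proof.
move=> gv.
have ne : [set s; v] \notin [set [set v; t]].
  by rewrite inE; apply/negP=> /eqP h; move: (Bv_card hst gv); rewrite cards2 h eqxx.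
rewrite /Bv -[[set [set v; t]]]setU0 mu_split; last by rewrite setU0.
rewrite !mu_split ?in_set0 //.
rewrite !mu0 !inE !eqxx /=.
move: ne; rewrite inE eq_sym => /negbTE ->; rewrite /=; ring.
Qed.

Lemma mu_BC (R : comPzRingType) (r : R) (hst : s != t) (X : {set 'I_n}) : good X ->
  mu r (BC X) (fun G => [forall v in X, ~~ (([set s; v] \in G) && ([set v; t] \in G))])
  = (1 - (1 - r) ^+ 2) ^+ #|X|.
Proof.
elim/set_induc: X => [|v X vX IH] gX.
  rewrite BC0 mu0 cards0 expr0.
  have h : [forall v in set0, ~~ (([set s; v] \in (set0 : {set {set 'I_n}})) && ([set v; t] \in (set0 : {set {set 'I_n}})))] by apply/forall_inP=> x; rewrite inE.
  by rewrite h.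
have [eU d] := BC_U1 hst vX gX.
have gv : (v != s) && (v != t) by apply: gX; rewrite setU11.
rewrite cardsU1 vX add1n exprS -IH; last by apply: good_U1 gX.
rewrite -(mu_Bv r hst gv) -mu_prod // -eU; apply: mu_ext => F sF.
have hsv : forall x, x \in X -> [set s; x] \in BC X.
  by move=> x xX; apply/bigcupP; exists x => //; rewrite !inE eqxx.
have hvt : forall x, x \in X -> [set x; t] \in BC X.
  by move=> x xX; apply/bigcupP; exists x => //; rewrite !inE eqxx orbT.
have -> : ([set s; v] \in F :&: Bv v) = ([set s; v] \in F) by rewrite inE !inE eqxx andbT.
have -> : ([set v; t] \in F :&: Bv v) = ([set v; t] \in F) by rewrite inE !inE eqxx orbT andbT.
apply/forall_inP/andP.
  move=> h; split; first by apply: h; rewrite setU11.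
  apply/forall_inP=> x xX; rewrite !inE hsv // hvt // !andbT.
  by apply: h; rewrite inE xX orbT.
case=> h1 /forall_inP h2 x; rewrite in_setU1 => /orP[/eqP->//|xX].
by have := h2 x xX; rewrite !inE hsv // hvt // !andbT.
Qed.


Definition Bst (E : {set {set 'I_n}}) := E :&: [set [set s; t]].

Lemma good_Cn E : good (Cn E).
Proof. by move=> v; rewrite inE => /and4P[-> -> _ _]. Qed.

Lemma BC_Cn_sub E : BC (Cn E) \subset E.
Proof.
apply/subsetP=> e /bigcupP[v]; rewrite inE => /and4P[_ _ h1 h2].
by rewrite !inE => /orP[/eqP->|/eqP->].
Qed.

Lemma Bst_disj (hst : s != t) X : good X -> forall E, Bst E :&: BC X = set0.
Proof.
move=> gX E; apply/setP=> e; rewrite in_set0; apply/negbTE/negP; rewrite !inE.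
case/andP=> /andP[_ /eqP ->] /bigcupP[v vX].
have /andP[vs vt] := gX v vX.
rewrite !inE => /orP[/eqP h|/eqP h].
  have := in2 h (_ : t \in _); rewrite !inE eqxx orbT => /(_ isT).
  by rewrite eq_sym (negbTE hst) eq_sym (negbTE vt).
have := in2 h (_ : s \in _); rewrite !inE eqxx => /(_ isT).
by rewrite eq_sym (negbTE vs) (negbTE hst).
Qed.

Lemma rel_formula (R : realType) (r : R) (hst : s != t) E :
  reliability 2 E s t r =
  1 - (if [set s; t] \in E then r else 1) * (1 - (1 - r) ^+ 2) ^+ #|Cn E|.
Proof.
have -> : reliability 2 E s t r = mu r E (fun F => has_short_path 2 F s t).
  rewrite /reliability /pathset /mu big_mkcondr; apply: eq_bigr => F _.
  by case: (has_short_path _ _ _ _); rewrite ?mulr1 ?mulr0.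
rewrite (@mu_ext _ _ r _ _ (fun F => ~~ ~~ has_short_path 2 F s t)); last by move=> F _; rewrite negbK.
rewrite (mu_neg r _ (fun F => ~~ has_short_path 2 F s t)).
congr (1 - _).
set U := Bst E :|: BC (Cn E).
set P1 := fun G : {set {set 'I_n}} => [set s; t] \notin G.
set P2 := fun G : {set {set 'I_n}} =>
  [forall v in Cn E, ~~ (([set s; v] \in G) && ([set v; t] \in G))].
have sU : U \subset E by rewrite subUset subsetIl BC_Cn_sub.
have d := Bst_disj hst (@good_Cn E) E.
rewrite (@mu_ext _ _ r _ _ (fun F => (fun G => P1 (G :&: Bst E) && P2 (G :&: BC (Cn E))) (F :&: U))); last first.
  move=> F sF /=.
  rewrite -!setIA (setIidPr (subsetUl _ _)) (setIidPr (subsetUr _ _)).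
  rewrite hsp_char // negb_or /P1 /P2; congr (_ && _).
    rewrite !inE; case: ([set s; t] \in F) / idP => h //=.
    by move/subsetP: sF => /(_ _ h) ->; rewrite eqxx.
  have hsv : forall x, x \in Cn E -> [set s; x] \in BC (Cn E).
    by move=> x xX; apply/bigcupP; exists x => //; rewrite !inE eqxx.
  have hvt : forall x, x \in Cn E -> [set x; t] \in BC (Cn E).
    by move=> x xX; apply/bigcupP; exists x => //; rewrite !inE eqxx orbT.
  rewrite negb_exists; apply/forallP/forall_inP.
    move=> h x xC.
    rewrite !inE hsv // hvt // !andbT; have := h x; rewrite !negb_and.
    by move: xC; rewrite inE => /and4P[-> -> _ _].
  move=> h x; apply/negP=> /and4P[xs xt h1 h2].
  have xC : x \in Cn E.
    by rewrite inE xs xt; move/subsetP: sF => sF; rewrite !sF.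
  by have := h x xC; rewrite !inE hsv // hvt // h1 h2.
rewrite (@mu_restr _ _ r U E (fun G => P1 (G :&: Bst E) && P2 (G :&: BC (Cn E))) sU) mu_prod // mu_BC //; last by apply: good_Cn.
congr (_ * _).
rewrite /Bst /P1; case: ifP => h.
  rewrite (setIidPr _); last by rewrite sub1set.
  rewrite -[[set [set s; t]]]setU0 mu_split ?in_set0 // !mu0 !inE eqxx /=; ring.
rewrite (_ : E :&: _ = set0) ?mu0 ?inE //.
apply/setP=> e; rewrite !inE; case: eqP => [->|]; rewrite ?h ?andbF //.
Qed.

Lemma card_bounds (hst : s != t) E :
  (#|Cn E| <= n - 2)%N /\ (2 * #|Cn E| + ([set s; t] \in E) <= #|E|)%N.
Proof.
split.
  have : Cn E \subset ~: [set s; t].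
    apply/subsetP=> v; rewrite !inE => /and4P[vs vt _ _]; by rewrite negb_or vs vt.
  move/subset_leq_card => h; have := cardsC [set s; t]; rewrite cards2 hst card_ord => e.
  rewrite /= in e; move: h e; move: (#|Cn E|) (#|~: _|) => a b h e; by rewrite -e addKn.
have hs : Bst E :|: BC (Cn E) \subset E by rewrite subUset subsetIl BC_Cn_sub.
have := subset_leq_card hs.
rewrite cardsU (Bst_disj hst (@good_Cn E) E) cards0 subn0 BC_card //; last by apply: good_Cn.
have -> : #|Bst E| = ([set s; t] \in E).
  rewrite /Bst; case h : ([set s; t] \in E).
    by rewrite (setIidPr _) ?cards1 // sub1set.
  rewrite (_ : E :&: _ = set0) ?cards0 //.
  apply/setP=> e; rewrite !inE; case: eqP => [->|]; rewrite ?h ?andbF //.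
by rewrite addnC.
Qed.

End Graph.

End PK.
Import PK.

Module PL.
Set Implicit Arguments. Unset Strict Implicit. Unset Printing Implicit Defensive.

Lemma imset2_pair (aT rT : finType) (f : aT -> rT) (a b : aT) :
  f @: [set a; b] = [set f a; f b].
Proof. by rewrite imsetU1 imset_set1. Qed.

Lemma A_mem K (x y : 'I_K.+2) : x != y -> (x <= 1)%N -> [set x; y] \in A_edges K.
Proof. by move=> xy x1; apply/imset2P; exists x y => //; rewrite inE xy x1. Qed.

Lemma A_memP K e : e \in A_edges K ->
  exists x y : 'I_K.+2, [/\ e = [set x; y], x != y & (x <= 1)%N].
Proof. case/imset2P=> x y _ yin ->; move: yin; rewrite !inE => /and3P[_ xy x1]; by exists x, y. Qed.

Lemma A_sv K : nat_of_ord (A_s K) = 0. Proof. by rewrite /A_s inordK. Qed.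
Lemma A_tv K : nat_of_ord (A_t K) = 1. Proof. by rewrite /A_t inordK. Qed.

Lemma pair_other n (a b c d : 'I_n) : [set a; b] = [set c; d] -> a != b -> a = c -> b = d.
Proof.
move=> h ab ac; have := in2 h (_ : b \in _); rewrite !inE eqxx orbT => /(_ isT).
by case/orP=> /eqP // bc; move: ab; rewrite ac bc eqxx.
Qed.

Lemma tt_char n (E : {set {set 'I_n}}) (s t : 'I_n) K : s != t ->
  (tt_subgraph E s t (A_edges K) (A_s K) (A_t K) <->
   ([set s; t] \in E /\ (K <= #|Cn s t E|)%N)).
Proof.
move=> hst; split.
  case=> f [finj hT hE].
  have st0 : A_s K != A_t K by apply/negP=> /eqP /(congr1 (@nat_of_ord _)); rewrite A_sv A_tv.
  have s0le : (A_s K <= 1)%N by rewrite A_sv.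
  have t0le : (A_t K <= 1)%N by rewrite A_tv.
  split.
    by rewrite -hT -imset2_pair; apply: hE; apply: A_mem.
  pose g (j : 'I_K) : 'I_n := f (inord j.+2).
  have ginj : injective g.
    move=> j j' /finj /(congr1 (@nat_of_ord _)); rewrite !inordK ?ltnS ?ltn_ord //.
    by move=> [] /val_inj.
  rewrite -{1}(card_ord K) -cardsT -(card_imset _ ginj).
  apply: subset_leq_card; apply/subsetP=> _ /imsetP[j _ ->].
  set i : 'I_K.+2 := inord j.+2.
  have iv : nat_of_ord i = j.+2 by rewrite /i inordK // !ltnS ltn_ord.
  have is0 : i != A_s K by apply/negP=> /eqP /(congr1 (@nat_of_ord _)); rewrite iv A_sv.
  have it0 : i != A_t K by apply/negP=> /eqP /(congr1 (@nat_of_ord _)); rewrite iv A_tv.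
  have e1 : [set f (A_s K); f i] \in E.
    by rewrite -imset2_pair; apply: hE; apply: A_mem; rewrite // eq_sym.
  have e2 : [set f (A_t K); f i] \in E.
    by rewrite -imset2_pair; apply: hE; apply: A_mem; rewrite // eq_sym.
  change (g j) with (f i).
  have fst : f (A_s K) != f (A_t K) by rewrite (inj_eq finj).
  have [[hs ht]|[hs ht]] : (f (A_s K) = s /\ f (A_t K) = t) \/ (f (A_s K) = t /\ f (A_t K) = s).
    have : f (A_s K) \in [set s; t] by rewrite -hT !inE eqxx.
    rewrite !inE => /orP[/eqP h|/eqP h]; [left|right]; split => //.
      exact: pair_other hT fst h.
    by apply: (pair_other (d := s) _ fst h); rewrite hT setUC.
  - rewrite inE -hs -ht !(inj_eq finj) is0 it0 /= e1 /=.
    by rewrite setUC.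
  - rewrite inE -hs -ht !(inj_eq finj) is0 it0 /= e2 /=.
    by rewrite setUC.
case=> hE hK.
set l := enum (Cn s t E).
have sl : size l = #|Cn s t E| by rewrite cardE.
have lC : forall k, (k < K)%N -> nth s l k \in Cn s t E.
  by move=> k hk; rewrite -mem_enum; apply: mem_nth; rewrite sl; apply: leq_trans hK.
have nsl : s \notin l by rewrite mem_enum inE eqxx.
have ntl : t \notin l by rewrite mem_enum inE eqxx !andbF.
have ul : uniq (s :: t :: l) by rewrite /= inE negb_or hst nsl ntl enum_uniq.
pose f (i : 'I_K.+2) : 'I_n := nth s (s :: t :: l) i.
exists f; split.
- have hi : forall k : 'I_K.+2, (k < size (s :: t :: l))%N.
    move=> k; rewrite /= sl !ltnS -ltnS; apply: leq_trans (ltn_ord k) _; by rewrite !ltnS.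
  move=> i j hij; apply/val_inj/eqP; rewrite -(nth_uniq s (hi i) (hi j) ul).
  by apply/eqP.
- by rewrite /f A_sv A_tv.
move=> e /A_memP [x [y [-> xy x1]]]; rewrite imset2_pair /f.
case: x xy x1 => [[|[|x']] hx] //; case: y => [[|[|y']] hy] // xy _ /=.
- by have := lC y'; move=> /(_ hy); rewrite inE => /and4P[_ _ -> _].
- by rewrite setUC.
- have := lC y'; move=> /(_ hy); rewrite inE => /and4P[_ _ _ h].
  by rewrite setUC.
Qed.

End PL.
Import PL.

Module PM.
Set Implicit Arguments. Unset Strict Implicit. Unset Printing Implicit Defensive.

Lemma extend_subset (T : finType) (Y X : {set T}) d : Y \subset X ->
  (#|Y| + d <= #|X|)%N -> exists D : {set T}, [/\ Y \subset D, D \subset X & #|D| = #|Y| + d]%N.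
Proof.
move=> sYX; elim: d => [|d IH] h.
  by exists Y; rewrite addn0.
have h' : (#|Y| + d <= #|X|)%N by apply: leq_trans h; rewrite addnS.
have [D [sYD sDX cD]] := IH h'.
have : (0 < #|X :\: D|)%N.
  by rewrite cardsD (setIidPr sDX) cD subn_gt0 -addnS.
case/card_gt0P=> x; rewrite inE => /andP[xD xX].
exists (x |: D); split.
- by apply: subset_trans sYD (subsetU1 _ _).
- by rewrite subUset sub1set xX.
- by rewrite cardsU1 xD cD add1n addnS.
Qed.

Section BP.
Local Open Scope ring_scope.

Lemma b_props (R : realType) (r : R) : 0 <= r -> r <= 1 ->
  [/\ 0 <= 1 - (1 - r) ^+ 2, 1 - (1 - r) ^+ 2 <= 1 & r <= 1 - (1 - r) ^+ 2].
Proof. move=> r0 r1; rewrite expr2; split; nra. Qed.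
End BP.



End PM.
Import PM.

Unset Implicit Arguments.

Theorem proposition1 (R : realType) (n m : nat) (E : {set {set 'I_n}}) (s t : 'I_n) :
  (2 <= n)%N -> (1 <= m)%N -> (m <= 'C(n, 2))%N ->
  ttg E s t -> #|E| = m ->
  (UMRTTG R 2 E s t <->
   tt_subgraph E s t (A_edges (minn ((m + 3) %/ 2) n - 2)) (A_s _) (A_t _)).
Proof.
Local Open Scope ring_scope.
move=> hn hm hmC [hE hst] hcard.
rewrite (tt_char _ _ hst).
set K := (minn ((m + 3) %/ 2) n - 2)%N.
have hK1 : forall k, (2 * k + 1 <= m)%N -> (k <= n - 2)%N -> (k <= K)%N.
  by move=> k; rewrite /K; lia.
have hK2 : forall k, (2 * k <= m)%N -> (k <= n - 2)%N -> (k <= K.+1)%N.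
  by move=> k; rewrite /K; lia.
have [hKm hKn] : (2 * K + 1 <= m)%N /\ (K <= n - 2)%N by rewrite /K; lia.
clearbody K.
split; last first.
  case=> stE hk E' s' t' [hE' hst'] hc r r0 r1.
  rewrite !rel_formula // stE lerD2l lerN2.
  have [b0 b1 rb] := b_props r0 r1.
  set b := 1 - (1 - r) ^+ 2.
  have [kb1 kb2] := card_bounds hst' E'.
  have h1 : r * b ^+ #|Cn s t E| <= r * b ^+ K.
    by apply: ler_wpM2l => //; apply: ler_wiXn2l.
  apply: (le_trans h1).
  case: ifP => h; rewrite h in kb2.
    apply: ler_wpM2l => //; apply: ler_wiXn2l => //; apply: hK1 => //.
    by move: kb2; rewrite hc hcard.
  rewrite mul1r; apply: le_trans (_ : b ^+ K.+1 <= _).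
    by rewrite exprS; apply: ler_wpM2r => //; apply: exprn_ge0.
  apply: ler_wiXn2l => //; apply: hK2 => //; by move: kb2; rewrite hc hcard addn0.
move=> hU.
have cC : #|~: [set s; t]| = (n - 2)%N.
  have := cardsC [set s; t]; rewrite cards2 hst card_ord /=.
  move: #|~: _| => a e; by rewrite -e addKn.
have hC : (#|(set0 : {set 'I_n})| + K <= #|~: [set s; t]|)%N by rewrite cards0 add0n cC.
have [C0 [_ sC0 cC0]] := @extend_subset _ set0 (~: [set s; t]) K (sub0set _) hC.
rewrite cards0 add0n in cC0.
have gC0 : good s t C0.
  by move=> v /(subsetP sC0); rewrite !inE negb_or.
have nstB : [set s; t] \notin BC s t C0.
  apply/negP => h; have := Bst_disj hst gC0 [set [set s; t]].
  move/setP/(_ [set s; t]); rewrite in_set0 /Bst !inE eqxx h //.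
set Base := [set s; t] |: BC s t C0.
have cBase : #|Base| = (2 * K + 1)%N by rewrite cardsU1 nstB BC_card // cC0 add1n addn1.
set Pairs := [set e : {set 'I_n} | #|e| == 2].
have cP : #|Pairs| = 'C(n, 2) by rewrite card_draws card_ord.
have sBP : Base \subset Pairs.
  apply/subsetP=> e; rewrite in_setU1 => /orP[/eqP -> | /bigcupP [v vC]].
    by rewrite inE cards2 hst.
  have /andP[vs vt] := gC0 v vC.
  rewrite /Bv !inE => /orP[/eqP->|/eqP->]; rewrite cards2; [by rewrite (eq_sym s) vs | by rewrite vt].
have hle : (#|Base| + (m - (2 * K + 1)) <= #|Pairs|)%N.
  rewrite cBase cP; move: hKm hmC; move: ('C(n, 2)) => c; lia.
have [D [sBD sDP cD]] := extend_subset sBP hle.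
have cDm : #|D| = #|E| by rewrite cD cBase hcard; move: hKm; clear; lia.
have ttgD : ttg D s t.
  by split => // e /(subsetP sDP); rewrite inE => /eqP.
have := hU D s t ttgD cDm (1/2) _ _.
have stD : [set s; t] \in D by apply: (subsetP sBD); rewrite setU11.
have kD : (K <= #|Cn s t D|)%N.
  rewrite -cC0; apply: subset_leq_card; apply/subsetP => v vC.
  have /andP[vs vt] := gC0 v vC.
  rewrite inE vs vt /=; apply/andP; split; apply: (subsetP sBD); rewrite in_setU1;
    apply/orP; right; apply/bigcupP; exists v => //; rewrite !inE eqxx ?orbT //.
rewrite !rel_formula // stD.
set b := 1 - (1 - 1/2) ^+ 2 : R.
have bv : b = 3/4 by rewrite /b expr2; clear; lra.
have b0 : 0 < b by rewrite bv; clear; lra.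
have b1 : b < 1 by rewrite bv; clear; lra.
have hkD : b ^+ #|Cn s t D| <= b ^+ K.
  by apply: (ler_wiXn2l (ltW b0) (ltW b1) kD).
have [kb1 kb2] := card_bounds hst E.
rewrite lerD2l lerN2 => /(_ _ _) hh.
have ha : (0:R) <= 1/2 by clear -R; lra.
have hb : (1/2:R) <= 1 by clear -R; lra.
have {}hh := hh ha hb.
case: ifP hh => h hh; rewrite h in kb2.
  split => //; rewrite -(ler_iXn2l b0 b1).
  have : 1/2 * b ^+ #|Cn s t E| <= 1/2 * b ^+ K by apply: le_trans hh _; apply: ler_wpM2l => //; clear; lra.
  by rewrite ler_pM2l //; clear; lra.
exfalso.
have kE : (#|Cn s t E| <= K.+1)%N by apply: hK2 => //; move: kb2; rewrite hcard addn0.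
have h2 : b ^+ K.+1 <= b ^+ #|Cn s t E|.
  by apply: (ler_wiXn2l (ltW b0) (ltW b1) kE).
have xK : 0 < b ^+ K by apply: exprn_gt0.
move: h2 hh hkD xK; rewrite exprS mul1r.
move: (b ^+ K) (b ^+ #|Cn s t E|) (b ^+ #|Cn s t D|) => x y z.
rewrite bv; clear; lra.
Qed.
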